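(* For $k\ge1$ and $g\in\mathbb C[x_1^{\pm1},\dots,x_k^{\pm1}]^{S(k)}$ put $\widetilde E_k(g)=q_3^{\frac{k-k^2}2}(q_1^{-1}-1)^k\frac{\prod_{1\le r\ne s\le k}(x_r-q_1^{-1}x_s)\,g(x_1,\dots,x_k)}{\prod_{1\le r\ne s\le k}(x_r-x_s)}$ and $\widetilde F_k(g)=(q_2/q_1)^{\frac{k-k^2}2}(1-q_1)^k\frac{\prod_{1\le r\ne s\le k}(x_r-q_1^{-1}x_s)\,g(x_1,\dots,x_k)}{\prod_{1\le r\ne s\le k}(x_r-x_s)}$. Then (a) $\Phi^>(\widetilde E_k(g))=\sum_{J\subset\{1,\dots,a\},|J|=k}\Big\{\prod_{r\in J}^{s\notin J}\frac{w_r-q_2^{-1}w_s}{w_r-w_s}\prod_{r\in J}Z(w_r)\cdot g(\{w_r\}_{r\in J})\prod_{r\in J}D_r^{-1}\Big\}$; (b) $\Phi^<(\widetilde F_k(g))=\sum_{J\subset\{1,\dots,a\},|J|=k}\Big\{\prod_{r\in J}^{s\notin J}\frac{w_r-q_2w_s}{w_r-w_s}\cdot g(\{q_1w_r\}_{r\in J})\prod_{r\in J}D_r\Big\}$.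
   Context: Fix $q_1,q_2,q_3\in\mathbb C^\times$, not roots of unity, with $q_1q_2q_3=1$, and square roots $q_1^{1/2},q_2^{1/2}$. Fix $a\ge1$, $N\ge0$, $(z_1,\dots,z_N)\in(\mathbb C^\times)^N$, $Z(z)=\prod_{k=1}^N(1-z_k/z)$. $\widetilde{\mathcal A}^{q_1}$ is the $\mathbb C$-algebra generated by $D_r^{\pm1},w_r^{\pm1}$ ($1\le r\le a$), all commuting except $D_rw_s=q_1^{\delta_{rs}}w_sD_r$, localized at $w_r-q_1^mw_s$ ($r\ne s$, $m\in\mathbb Z$). Let $Y_r(z)=\frac{-1}{1-q_1^{-1}}Z(z)\prod_{s\ne r}\frac{z-w_sq_2^{-1}}{z-w_s}$, $Y'_r(z)=\frac{1}{1-q_1}\prod_{s\ne r}\frac{zq_1^{-1}-w_sq_2}{zq_1^{-1}-w_s}$, $\zeta(z/w)=\frac{\prod_{i=1}^3(z-q_i^{-1}w)}{(z-w)^3}$, $\varphi(z/w)=\frac{(q_1^{1/2}z-q_1^{-1/2}w)(q_2^{1/2}z-q_2^{-1/2}w)}{(z-w)^2}$. $\mathbb S=\bigoplus_k\mathbb S_k$ with $\mathbb S_k$ the space of $f/\prod_{r\ne s}(x_r-x_s)$, $f$ a symmetric Laurent polynomial over $\mathbb C$ in $x_1,\dots,x_k$, with the shuffle product $F\star G=\frac{1}{k!\ell!}\mathrm{Sym}(F(x_1..x_k)G(x_{k+1}..x_{k+\ell})\prod_{r\le k<r'}\zeta(x_r/x_{r'}))$; $\mathbb S^{\mathrm{op}}$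 has opposite product. The maps $\Phi^>:\mathbb S\to\widetilde{\mathcal A}^{q_1}$, $\Phi^<:\mathbb S^{\mathrm{op}}\to\widetilde{\mathcal A}^{q_1}$ are defined on degree $k$ by $\Phi^>(E)=\sum_{m_1+\dots+m_a=k}\{\prod_{r}\prod_{p\le m_r}Y_r(w_rq_1^{-(p-1)})\cdot E(\{w_rq_1^{-(p-1)}\}_{r}^{p\le m_r})\prod_r\prod_{p_1<p_2\le m_r}\zeta^{-1}(\frac{w_rq_1^{-(p_1-1)}}{w_rq_1^{-(p_2-1)}})\prod_{r_1\ne r_2}\prod_{p_1\le m_{r_1},p_2\le m_{r_2}}\varphi^{-1}(\frac{w_{r_1}q_1^{-(p_1-1)}}{w_{r_2}q_1^{-(p_2-1)}})\prod_rD_r^{-m_r}\}$, $\Phi^<(F)=\sum_{m_1+\dots+m_a=k}\{\prod_{r}\prod_{p\le m_r}Y'_r(w_rq_1^{p})\cdot F(\{w_rq_1^{p}\}_{r}^{p\le m_r})\prod_r\prod_{p_1<p_2\le m_r}\zeta^{-1}(\frac{w_rq_1^{p_2}}{w_rq_1^{p_1}})\prod_{r_1\ne r_2}\prod_{p_1,p_2}\varphi^{-1}(\frac{w_{r_2}q_1^{p_2}}{w_{r_1}q_1^{p_1}})\prod_rD_r^{m_r}\}$, with $m_r\in\mathbb N$, $\zeta^{-1}=1/\zeta$, $\varphi^{-1}=1/\varphi$. *)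

(* Defs.v *)
From HB Require Import structures.
From mathcomp Require Import all_boot all_order all_algebra fraction.
From mathcomp Require Import complex.
From mathcomp Require Import Rstruct.
From mathcomp Require Export mpoly.
Set Implicit Arguments. Unset Strict Implicit. Unset Printing Implicit Defensive.
Import GRing.Theory Num.Theory.
Local Open Scope ring_scope.

Definition CC : numClosedFieldType := Rdefinitions.R[i].

Section Lemma37Defs.
Variables (a N : nat) (zs : 'I_N -> CC) (q1 q2 q3 sq1 sq2 : CC).

(* Coefficients (in w) of elements of the quantum torus \tilde A^{q1}
   live in (the localization C[w^{+-1}]_loc of C[w] contained in) K. *)
Definition Kf := {fraction {mpoly CC[a]}}.
Definition cK (c : CC) : Kf := tofrac (c%:MP).
Definition wK (r : 'I_a) : Kf := tofrac 'X_r.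

(* Elements of \tilde A^{q1} in normal-ordered form  sum_e f_e(w) D^e
   (all w's to the left of all D's; D^e = prod_r D_r^(e r), e : Z^a) are
   represented by their coefficient function  e |-> f_e. Since the monomials
   D^e form a basis of \tilde A^{q1} as a left module over its subalgebra of
   rational functions in w, two elements are equal iff these coefficient
   functions agree. *)
Definition Atil := {ffun 'I_a -> int} -> Kf.

Definition Zf (x : Kf) : Kf := \prod_(j < N) (1 - cK (zs j) / x).

Definition Yf (r : 'I_a) (x : Kf) : Kf :=
  cK (-1 / (1 - q1^-1)) * Zf x *
  \prod_(s < a | s != r) ((x - wK s * cK q2^-1) / (x - wK s)).
Definition Ypf (r : 'I_a) (x : Kf) : Kf :=
  cK (1 / (1 - q1)) *
  \prod_(s < a | s != r) ((x * cK q1^-1 - wK s * cK q2) / (x * cK q1^-1 - wK s)).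

(* zeta(x) = prod_i (x - q_i^{-1}) / (x - 1)^3,
   phi(x) = (q1^{1/2} x - q1^{-1/2})(q2^{1/2} x - q2^{-1/2}) / (x - 1)^2
   (the dehomogenized versions of zeta(z/w), phi(z/w)). *)
Definition zetaf (x : Kf) : Kf :=
  (x - cK q1^-1) * (x - cK q2^-1) * (x - cK q3^-1) / (x - 1) ^+ 3.
Definition phif (x : Kf) : Kf :=
  (cK sq1 * x - cK sq1^-1) * (cK sq2 * x - cK sq2^-1) / (x - 1) ^+ 2.

Definition ptsG (m : 'I_a -> nat) : seq Kf :=
  flatten [seq [seq wK r * cK (q1 ^- p) | p <- iota 0 (m r)] | r <- enum 'I_a].
Definition ptsL (m : 'I_a -> nat) : seq Kf :=
  flatten [seq [seq wK r * cK (q1 ^+ p) | p <- iota 1 (m r)] | r <- enum 'I_a].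

(* A degree-k element of the shuffle algebra is given through its values
   E : ('I_k -> K) -> K (a rational function of x_1..x_k evaluated at points
   of K). Coefficient of prod_r D_r^{-m_r} in Phi^>(E).
   (Indices p in 'I_(m r) correspond to p+1 in the paper.) *)
Definition coefG (k : nat) (E : ('I_k -> Kf) -> Kf) (m : 'I_a -> nat) : Kf :=
  (\prod_(r < a) \prod_(p < m r) Yf r (wK r * cK (q1 ^- p))) *
  E (fun i => nth 0 (ptsG m) i) *
  (\prod_(r < a) \prod_(p1 < m r) \prod_(p2 < m r | (p1 < p2)%N)
      (zetaf ((wK r * cK (q1 ^- p1)) / (wK r * cK (q1 ^- p2))))^-1) *
  (\prod_(r1 < a) \prod_(r2 < a | r1 != r2)
     \prod_(p1 < m r1) \prod_(p2 < m r2)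
      (phif ((wK r1 * cK (q1 ^- p1)) / (wK r2 * cK (q1 ^- p2))))^-1).

Definition coefL (k : nat) (F : ('I_k -> Kf) -> Kf) (m : 'I_a -> nat) : Kf :=
  (\prod_(r < a) \prod_(p < m r) Ypf r (wK r * cK (q1 ^+ p.+1))) *
  F (fun i => nth 0 (ptsL m) i) *
  (\prod_(r < a) \prod_(p1 < m r) \prod_(p2 < m r | (p1 < p2)%N)
      (zetaf ((wK r * cK (q1 ^+ p2.+1)) / (wK r * cK (q1 ^+ p1.+1))))^-1) *
  (\prod_(r1 < a) \prod_(r2 < a | r1 != r2)
     \prod_(p1 < m r1) \prod_(p2 < m r2)
      (phif ((wK r2 * cK (q1 ^+ p2.+1)) / (wK r1 * cK (q1 ^+ p1.+1))))^-1).

Definition Phi_gt (k : nat) (E : ('I_k -> Kf) -> Kf) : Atil :=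
  fun e => \sum_(m : {ffun 'I_a -> 'I_k.+1} | (\sum_(r < a) (m r : nat) == k)%N)
     (if e == [ffun r => - ((m r : nat)%:Z)] then coefG E (fun r => m r) else 0).

Definition Phi_lt (k : nat) (F : ('I_k -> Kf) -> Kf) : Atil :=
  fun e => \sum_(m : {ffun 'I_a -> 'I_k.+1} | (\sum_(r < a) (m r : nat) == k)%N)
     (if e == [ffun r => (m r : nat)%:Z] then coefL F (fun r => m r) else 0).

(* A symmetric Laurent polynomial g in k variables is given as
   g = P / (x_1 ... x_k)^n with P a symmetric polynomial; its value at
   a point x of K^k. *)
Definition gval (k : nat) (P : {mpoly CC[k]}) (n : nat) (x : 'I_k -> Kf) : Kf :=
  mmap cK x P / (\prod_(i < k) x i) ^+ n.

Definition Etil (k : nat) (P : {mpoly CC[k]}) (n : nat) (x : 'I_k -> Kf) : Kf :=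
  cK ((q3 ^+ 'C(k, 2))^-1 * (q1^-1 - 1) ^+ k) *
  (\prod_(r < k) \prod_(s < k | r != s) (x r - cK q1^-1 * x s)) * gval P n x /
  (\prod_(r < k) \prod_(s < k | r != s) (x r - x s)).
Definition Ftil (k : nat) (P : {mpoly CC[k]}) (n : nat) (x : 'I_k -> Kf) : Kf :=
  cK (((q2 / q1) ^+ 'C(k, 2))^-1 * (1 - q1) ^+ k) *
  (\prod_(r < k) \prod_(s < k | r != s) (x r - cK q1^-1 * x s)) * gval P n x /
  (\prod_(r < k) \prod_(s < k | r != s) (x r - x s)).

Definition RHSa (k : nat) (P : {mpoly CC[k]}) (n : nat) : Atil :=
  fun e => \sum_(J : {set 'I_a} | #|J| == k)
    (if e == [ffun r => - (((r \in J) : nat)%:Z)] then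
       (\prod_(r in J) \prod_(s in ~: J) ((wK r - cK q2^-1 * wK s) / (wK r - wK s))) *
       (\prod_(r in J) Zf (wK r)) *
       gval P n (fun i => nth 0 [seq wK r | r <- enum J] i)
     else 0).

Definition RHSb (k : nat) (P : {mpoly CC[k]}) (n : nat) : Atil :=
  fun e => \sum_(J : {set 'I_a} | #|J| == k)
    (if e == [ffun r => ((r \in J) : nat)%:Z] then
       (\prod_(r in J) \prod_(s in ~: J) ((wK r - cK q2 * wK s) / (wK r - wK s))) *
       gval P n (fun i => nth 0 [seq cK q1 * wK r | r <- enum J] i)
     else 0).

End Lemma37Defs.

Definition not_root_of_unity (q : CC) : Prop := forall d : nat, (0 < d)%N -> q ^+ d != 1.

(* Main.v *)
Require Import Defs.
From HB Require Import structures.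
From mathcomp Require Import all_boot all_order all_algebra fraction.
From mathcomp Require Import complex Rstruct mpoly.
From mathcomp Require Import ring zify.
From Stdlib Require Import FunctionalExtensionality.
Import GRing.Theory Num.Theory.
Local Open Scope ring_scope.

Section Helpers.
Variable a : nat.
Local Notation cK := (@cK a).
Local Notation wK := (@wK a).

Lemma cKM x y : cK (x * y) = cK x * cK y.
Proof. by rewrite /Defs.cK mpolyCM tofracM. Qed.
Lemma cK1 : cK 1 = 1.
Proof. by rewrite /Defs.cK mpolyC1 tofrac1. Qed.
Lemma cK0 : cK 0 = 0.
Proof. by rewrite /Defs.cK mpolyC0 tofrac0. Qed.
Lemma cKB x y : cK (x - y) = cK x - cK y.
Proof. by rewrite /Defs.cK mpolyCB tofracB. Qed.
Lemma cKX x m : cK (x ^+ m) = cK x ^+ m.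
Proof. elim: m => [|m IH]; first by rewrite !expr0 cK1. by rewrite !exprS cKM IH. Qed.
Lemma cK_eq0 x : (cK x == 0) = (x == 0).
Proof. by rewrite /Defs.cK tofrac_eq0 mpolyC_eq0. Qed.
Lemma cKV x : cK (x^-1) = (cK x)^-1.
Proof.
have [->|x0] := eqVneq x 0; first by rewrite invr0 cK0 invr0.
have cx0 : cK x != 0 by rewrite cK_eq0.
apply: (mulfI cx0); by rewrite -cKM !mulfV // cK1.
Qed.

Lemma wK_neq0 r : wK r != 0.
Proof.
rewrite /Defs.wK tofrac_eq0; apply/eqP => h.
have := congr1 (mcoeff (U_(r))) h.
by rewrite mcoeffXU mcoeff0 eqxx => /eqP; rewrite oner_eq0.
Qed.

Lemma wK_lin_neq0 r s c d : r != s -> c != 0 -> cK c * wK r - cK d * wK s != 0.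
Proof.
move=> rs c0; rewrite /Defs.cK /Defs.wK -!tofracM -tofracB tofrac_eq0; apply/eqP => h.
have := congr1 (mcoeff (U_(r))) h.
have sr : (s == r) = false by rewrite eq_sym; apply/negbTE.
rewrite mcoeffB !mcoeffCM !mcoeffXU mcoeff0 eqxx sr.
by rewrite mulr0 subr0 mulr1 => /eqP; rewrite (negbTE c0).
Qed.

Lemma flat_filter (f : 'I_a -> nat -> Kf a) b (J : {set 'I_a}) (s : seq 'I_a) :
  flatten [seq [seq f r p | p <- iota b (r \in J : nat)] | r <- s]
  = [seq f r b | r <- s & r \in J].
Proof. by elim: s => //= r s ->; case: (r \in J). Qed.

Lemma enum_set_filter (J : {set 'I_a}) : enum J = [seq r <- enum 'I_a | r \in J].
Proof. by rewrite enumT /enum_mem. Qed.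

Lemma flat_size (f : 'I_a -> nat -> Kf a) b (m : 'I_a -> nat) (s : seq 'I_a) :
  size (flatten [seq [seq f r p | p <- iota b (m r)] | r <- s]) = (\sum_(r <- s) m r)%N.
Proof. elim: s => [|r s IH] /=; first by rewrite big_nil. by rewrite big_cons size_cat size_map size_iota IH. Qed.

Lemma sum_enum_ord (m : 'I_a -> nat) : (\sum_(r <- enum 'I_a) m r)%N = (\sum_(r < a) m r)%N.
Proof. by rewrite [index_enum _]unlock -enumT. Qed.

Lemma flat_split (f : 'I_a -> nat -> Kf a) b (m : 'I_a -> nat) (s : seq 'I_a) r0 :
  r0 \in s -> (1 < m r0)%N -> exists L R,
  flatten [seq [seq f r p | p <- iota b (m r)] | r <- s] = L ++ f r0 b :: f r0 b.+1 :: R.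
Proof.
case/splitPr => p1 p2 hm.
rewrite map_cat flatten_cat /=.
case E: (m r0) hm => [|[|n]] // _.
by exists (flatten [seq [seq f r p | p <- iota b (m r)] | r <- p1]),
  ([seq f r0 p | p <- iota b.+2 n] ++ flatten [seq [seq f r p | p <- iota b (m r)] | r <- p2]).
Qed.
End Helpers.


Lemma prod_pairs_zero (F : fieldType) k (x : 'I_k -> F) c (L R : seq F) x0 x1 :
  (fun i : 'I_k => x i) = (fun i => nth 0 (L ++ x0 :: x1 :: R) i) ->
  size (L ++ x0 :: x1 :: R) = k ->
  (x1 - c * x0 = 0 \/ x0 - c * x1 = 0) ->
  \prod_(r < k) \prod_(s < k | r != s) (x r - c * x s) = 0.
Proof.
move=> hx hs hz.
have hL : ((size L).+1 < k)%N by rewrite -hs size_cat /= !addnS ltnS ltnS leq_addr.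
have hL0 : (size L < k)%N by apply: ltnW.
pose i0 := Ordinal hL0. pose i1 := Ordinal hL.
have e0 : x i0 = x0 by rewrite (congr1 (fun f => f i0) hx) /= nth_cat ltnn subnn.
have e1 : x i1 = x1 by rewrite (congr1 (fun f => f i1) hx) /= nth_cat ltnNge leqnSn /= subSnn.
have ne : i0 != i1 by rewrite -val_eqE /= eq_sym; apply/eqP; lia.
case: hz => hz.
- rewrite (bigD1 i1) //= (bigD1 i0) 1?eq_sym //= e0 e1 hz.
  by rewrite mul0r mul0r.
- rewrite (bigD1 i0) //= (bigD1 i1) //= e0 e1 hz.
  by rewrite mul0r mul0r.
Qed.

Lemma mem_enum_ord a (r0 : 'I_a) : r0 \in enum 'I_a.
Proof. by rewrite mem_enum. Qed.

Lemma coefG_vanish a N zs q1 q2 q3 sq1 sq2 k P n (m : 'I_a -> nat) r0 :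
  (\sum_(r < a) m r)%N = k -> (1 < m r0)%N ->
  @coefG a N zs q1 q2 q3 sq1 sq2 k (@Etil a q1 q3 k P n) m = 0.
Proof.
move=> hs h.
rewrite /coefG.
suff -> : @Etil a q1 q3 k P n (fun i => nth 0 (@ptsG a q1 m) i) = 0 by rewrite mulr0 !mul0r.
rewrite /Etil.
have [L [R hLR]] := @flat_split a (fun r p => @wK a r * cK a (q1 ^- p)) 0 m (enum 'I_a) r0 (mem_enum_ord _ r0) h.
rewrite (@prod_pairs_zero _ k (fun i => nth 0 (@ptsG a q1 m) i) (cK a q1^-1) L R (@wK a r0 * cK a (q1 ^- 0)) (@wK a r0 * cK a (q1 ^- 1)) _ _ (or_introl _)).
- by rewrite mulr0 !mul0r.
- by rewrite -hLR.
- by rewrite -hLR flat_size sum_enum_ord.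
- by rewrite expr0 expr1 invr1 cK1 mulr1 mulrC subrr.
Qed.

Lemma coefL_vanish a q1 q2 q3 sq1 sq2 k P n (m : 'I_a -> nat) r0 :
  q1 != 0 ->
  (\sum_(r < a) m r)%N = k -> (1 < m r0)%N ->
  @coefL a q1 q2 q3 sq1 sq2 k (@Ftil a q1 q2 k P n) m = 0.
Proof.
move=> q10 hs h.
rewrite /coefL.
suff -> : @Ftil a q1 q2 k P n (fun i => nth 0 (@ptsL a q1 m) i) = 0 by rewrite mulr0 !mul0r.
rewrite /Ftil.
have [L [R hLR]] := @flat_split a (fun r p => @wK a r * cK a (q1 ^+ p)) 1 m (enum 'I_a) r0 (mem_enum_ord _ r0) h.
rewrite (@prod_pairs_zero _ k (fun i => nth 0 (@ptsL a q1 m) i) (cK a q1^-1) L R (@wK a r0 * cK a (q1 ^+ 1)) (@wK a r0 * cK a (q1 ^+ 2)) _ _ (or_intror _)).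
- by rewrite mulr0 !mul0r.
- by rewrite -hLR.
- by rewrite -hLR flat_size sum_enum_ord.
- have c0 : cK a q1 != 0 by rewrite cK_eq0.
  rewrite cKV !cKX expr1 [X in _ - X]mulrCA expr2 mulKf // subrr //.
Qed.


Lemma pairA (F : fieldType) (wr ws s1 s2 : F): s1 != 0 -> s2 != 0 -> ws != 0 -> wr - ws != 0 ->
  s1 * wr * s1 - ws != 0 -> s2 * wr * s2 - ws != 0 ->
 ((wr - ws * (s2^+2)^-1) / (wr - ws)) * (wr - (s1^+2)^-1 * ws) * (wr - ws)^-1 *
 ((s1 * (wr/ws) - s1^-1) * (s2 * (wr/ws) - s2^-1) / (wr/ws - 1)^+2)^-1 = (s1*s2)^-1.
Proof.
move=> h1 h2 h3 h4 h5 h6.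
field. by rewrite !mulN1r h1 h2 h3 h4 h5 h6.
Qed.

Lemma pairB (F : fieldType) (wr ws s1 s2 : F): s1 != 0 -> s2 != 0 -> ws != 0 -> wr != 0 -> wr - ws != 0 ->
  s1 * wr * s1 - ws != 0 -> s2 * wr * s2 - ws != 0 ->
  s1 * ws * s1 - wr != 0 -> s2 * ws * s2 - wr != 0 ->
 ((wr - ws * s2^+2) / (wr - ws)) * (s1^+2 * ws - (s1^+2)^-1 * (s1^+2 * wr)) * (s1^+2 * ws - s1^+2 * wr)^-1 *
 ((s1 * ((ws * s1^+2) / (wr * s1^+2)) - s1^-1) * (s2 * ((ws * s1^+2) / (wr * s1^+2)) - s2^-1)
   / ((ws * s1^+2) / (wr * s1^+2) - 1)^+2)^-1 = s2^+2 * (s1*s2)^-1.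
Proof.
move=> h1 h2 h3 h4 h5 h6 h7 h8 h9.
have h10 : ws - wr != 0 by rewrite -opprB oppr_eq0.
have h11 : s1^+2 * ws - s1^+2 * wr != 0 by rewrite -mulrBr mulf_neq0 // expf_neq0.
field. by rewrite !mulN1r h1 h2 h4 h5 h8 h9 h10 h11.
Qed.

Lemma kk_bin (k : nat) : (k.-1 * k = 2 * 'C(k, 2))%N.
Proof.
elim: k => [|k IH] //.
rewrite binS bin1 mulnDr -IH; case: k {IH} => [|k] //=; nia.
Qed.

Lemma pow_pair (F : fieldType) (y : F) k : (y ^+ k.-1) ^+ k = (y ^+ 2) ^+ 'C(k, 2).
Proof. by rewrite -!exprM kk_bin. Qed.

Lemma constA (F : fieldType) (x1 x2 x3 s1 s2 : F) k :
  s1 ^+ 2 = x1 -> s2 ^+ 2 = x2 -> x1 * x2 * x3 = 1 -> 1 - x1^-1 != 0 ->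
  (-1 / (1 - x1^-1)) ^+ k * ((x3 ^+ 'C(k, 2))^-1 * (x1^-1 - 1) ^+ k) *
  (((s1 * s2)^-1) ^+ k.-1) ^+ k = 1.
Proof.
move=> h1 h2 h3 h4.
rewrite pow_pair exprVn [(s1 * s2) ^+ 2]exprMn h1 h2.
have e1 : (-1 / (1 - x1^-1)) * (x1^-1 - 1) = 1.
  have -> : x1^-1 - 1 = -(1 - x1^-1) by rewrite opprB.
  by rewrite mulrN !mulNr opprK mul1r mulVf.
have eAB : (-1 / (1 - x1^-1)) ^+ k * (x1^-1 - 1) ^+ k = 1 by rewrite -exprMn e1 expr1n.
have eX : (x3 ^+ 'C(k, 2))^-1 * ((x1 * x2)^-1) ^+ 'C(k, 2) = 1.
  by rewrite -exprVn -exprMn -invfM mulrC h3 invr1 expr1n.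
move: eAB eX.
move: ((-1 / (1 - x1^-1)) ^+ k) ((x1^-1 - 1) ^+ k) ((x3 ^+ 'C(k, 2))^-1) (((x1 * x2)^-1) ^+ 'C(k, 2)).
move=> u v p q e1' e2'.
by rewrite mulrCA e1' mulr1.
Qed.

Lemma constB (F : fieldType) (x1 x2 s1 s2 : F) k :
  s1 ^+ 2 = x1 -> s2 ^+ 2 = x2 -> x1 != 0 -> x2 != 0 -> 1 - x1 != 0 ->
  (1 / (1 - x1)) ^+ k * (((x2 / x1) ^+ 'C(k, 2))^-1 * (1 - x1) ^+ k) *
  ((x2 * (s1 * s2)^-1) ^+ k.-1) ^+ k = 1.
Proof.
move=> h1 h2 n1 n2 h4.
rewrite pow_pair.
have e3 : (x2 * (s1 * s2)^-1) ^+ 2 = x2 / x1.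
  rewrite exprMn exprVn exprMn h1 h2. field. by rewrite n1 n2.
rewrite e3.
have eAB : (1 / (1 - x1)) ^+ k * (1 - x1) ^+ k = 1 by rewrite -exprMn mul1r mulVf // expr1n.
have eX : ((x2 / x1) ^+ 'C(k, 2))^-1 * (x2 / x1) ^+ 'C(k, 2) = 1.
  by rewrite mulVf // expf_neq0 // mulf_neq0 // invr_eq0.
move: eAB eX.
move: ((1 / (1 - x1)) ^+ k) ((1 - x1) ^+ k) (((x2 / x1) ^+ 'C(k, 2))^-1) ((x2 / x1) ^+ 'C(k, 2)).
move=> u v p q e1' e2'.
by rewrite mulrCA e1' mulr1.
Qed.

Lemma combineA (F : fieldType) (Ck C0 PZ PA' PA PB PD PPhi g T : F) :
  PA * PB * PD^-1 * PPhi = T -> Ck * C0 * T = 1 ->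
  Ck * PZ * PA' * PA * (C0 * PB * g / PD) * PPhi = PA' * PZ * g.
Proof.
move=> h1 h2; rewrite -[RHS]mul1r -h2 -h1.
move: (PD^-1) => iD. ring.
Qed.

Lemma combineB (F : fieldType) (Ck C0 PA' PA PB PD PPhi g T : F) :
  PA * PB * PD^-1 * PPhi = T -> Ck * C0 * T = 1 ->
  Ck * PA' * PA * (C0 * PB * g / PD) * PPhi = PA' * g.
Proof.
move=> h1 h2; rewrite -[RHS]mul1r -h2 -h1.
move: (PD^-1) => iD. ring.
Qed.


Section Conv.
Variable a : nat.
Local Notation K := (Kf a).

Lemma pair_swap (J : {set 'I_a}) (F : 'I_a -> 'I_a -> K) :
  \prod_(r in J) \prod_(s in J | r != s) F r s = \prod_(r in J) \prod_(s in J | r != s) F s r.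
Proof.
rewrite (exchange_big_dep (fun s => s \in J)) /=; last by move=> i j _ /andP[].
apply: eq_bigr => s hs; apply: eq_bigl => r.
by rewrite hs /=; case: (r \in J) => //=; rewrite eq_sym.
Qed.

Lemma prod_card (J : {set 'I_a}) (x : K) :
  \prod_(r in J) \prod_(s in J | r != s) x = (x ^+ (#|J|).-1) ^+ #|J|.
Proof.
rewrite -prodr_const; apply: eq_bigr => r hr.
have -> : \prod_(s in J | r != s) x = \prod_(s in J :\ r) x.
  by apply: eq_bigl => s; rewrite in_setD1 andbC eq_sym.
by rewrite prodr_const [in RHS](cardsD1 r J) hr.
Qed.

Lemma prod2_conv (J : {set 'I_a}) (r0 : 'I_a) k (F : 'I_a -> K) (G : K -> K -> K) :
  #|J| = k ->
  \prod_(i < k) \prod_(j < k | i != j)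
     G (nth 0 [seq F r | r <- enum J] i) (nth 0 [seq F r | r <- enum J] j)
  = \prod_(r in J) \prod_(s in J | r != s) G (F r) (F s).
Proof.
move=> hJ.
have ht : size (enum J) = k by rewrite -cardE.
transitivity (\prod_(i < k) \prod_(j < k | i != j)
     G (F (nth r0 (enum J) i)) (F (nth r0 (enum J) j))).
  apply: eq_bigr => i _; apply: eq_bigr => j _.
  by rewrite !(nth_map r0) ?ht.
rewrite -[RHS]big_enum [RHS](big_nth r0) ht big_mkord.
apply: eq_bigr => i _.
rewrite -[RHS]big_enum_cond [RHS](big_nth r0) ht big_mkord.
apply: eq_bigl => j.
by rewrite nth_uniq ?ht ?enum_uniq.
Qed.
End Conv.

Lemma Etil_J a q1 q3 k (P : {mpoly CC[k]}) n (J : {set 'I_a}) (r0 : 'I_a) (F : 'I_a -> Kf a) :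
  #|J| = k ->
  @Etil a q1 q3 k P n (fun i => nth 0 [seq F r | r <- enum J] i) =
  cK a ((q3 ^+ 'C(k, 2))^-1 * (q1^-1 - 1) ^+ k) *
  (\prod_(r in J) \prod_(s in J | r != s) (F r - cK a q1^-1 * F s)) *
  gval P n (fun i => nth 0 [seq F r | r <- enum J] i) /
  (\prod_(r in J) \prod_(s in J | r != s) (F r - F s)).
Proof.
move=> hJ; rewrite /Etil.
rewrite (@prod2_conv a J r0 k F (fun x y => x - cK a q1^-1 * y) hJ).
by rewrite (@prod2_conv a J r0 k F (fun x y => x - y) hJ).
Qed.

Lemma Ftil_J a q1 q2 k (P : {mpoly CC[k]}) n (J : {set 'I_a}) (r0 : 'I_a) (F : 'I_a -> Kf a) :
  #|J| = k ->
  @Ftil a q1 q2 k P n (fun i => nth 0 [seq F r | r <- enum J] i) =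
  cK a (((q2 / q1) ^+ 'C(k, 2))^-1 * (1 - q1) ^+ k) *
  (\prod_(r in J) \prod_(s in J | r != s) (F r - cK a q1^-1 * F s)) *
  gval P n (fun i => nth 0 [seq F r | r <- enum J] i) /
  (\prod_(r in J) \prod_(s in J | r != s) (F r - F s)).
Proof.
move=> hJ; rewrite /Ftil.
rewrite (@prod2_conv a J r0 k F (fun x y => x - cK a q1^-1 * y) hJ).
by rewrite (@prod2_conv a J r0 k F (fun x y => x - y) hJ).
Qed.

Lemma ptsG_J a q1 (J : {set 'I_a}) :
  @ptsG a q1 (fun r => nat_of_bool (r \in J)) = [seq wK r | r <- enum J].
Proof.
rewrite /ptsG flat_filter enum_set_filter.
by apply: eq_map => r; rewrite expr0 invr1 cK1 mulr1.
Qed.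

Lemma ptsL_J a q1 (J : {set 'I_a}) :
  @ptsL a q1 (fun r => nat_of_bool (r \in J)) = [seq cK a q1 * wK r | r <- enum J].
Proof.
rewrite /ptsL flat_filter enum_set_filter.
by apply: eq_map => r; rewrite expr1 mulrC.
Qed.

Lemma cKq0 a (q : CC) : cK a (q ^- 0) = 1.
Proof. by rewrite expr0 invr1 cK1. Qed.

Lemma coefG_J a N zs q1 q2 q3 sq1 sq2 k (E : ('I_k -> Kf a) -> Kf a) (J : {set 'I_a}) :
  @coefG a N zs q1 q2 q3 sq1 sq2 k E (fun r => nat_of_bool (r \in J)) =
  (\prod_(r in J) Yf zs q1 q2 r (wK r)) *
  E (fun i => nth 0 [seq wK r | r <- enum J] i) *
  (\prod_(r in J) \prod_(s in J | r != s) (phif sq1 sq2 (wK r / wK s))^-1).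
Proof.
rewrite /coefG ptsG_J.
have -> : \prod_(r < a) \prod_(p < (r \in J)) Yf zs q1 q2 r (wK r * cK a (q1 ^- p))
    = \prod_(r in J) Yf zs q1 q2 r (wK r).
  rewrite [RHS]big_mkcond; apply: eq_bigr => r _.
  case: (r \in J); first by rewrite big_ord1 /= cKq0 mulr1.
  by rewrite big_ord0.
have -> : \prod_(r < a) \prod_(p1 < (r \in J)) \prod_(p2 < (r \in J) | (p1 < p2)%N)
      (zetaf q1 q2 q3 ((wK r * cK a (q1 ^- p1)) / (wK r * cK a (q1 ^- p2))))^-1 = 1.
  apply: big1 => r _; apply: big1 => p1 _; rewrite big_pred0 // => p2.
  have := ltn_ord p1; have := ltn_ord p2.
  case: (r \in J) p1 p2 => /= p1 p2; lia.
rewrite mulr1; congr (_ * _).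
rewrite [RHS]big_mkcond; apply: eq_bigr => r1 _.
case: (r1 \in J); last by apply: big1 => r2 _; rewrite big_ord0.
rewrite [RHS]big_mkcondl; apply: eq_bigr => r2 _.
rewrite big_ord1; case: (r2 \in J); last by rewrite big_ord0.
by rewrite big_ord1 /= !cKq0 !mulr1.
Qed.

Lemma coefL_J a q1 q2 q3 sq1 sq2 k (E : ('I_k -> Kf a) -> Kf a) (J : {set 'I_a}) :
  @coefL a q1 q2 q3 sq1 sq2 k E (fun r => nat_of_bool (r \in J)) =
  (\prod_(r in J) Ypf q1 q2 r (wK r * cK a q1)) *
  E (fun i => nth 0 [seq cK a q1 * wK r | r <- enum J] i) *
  (\prod_(r in J) \prod_(s in J | r != s) (phif sq1 sq2 ((wK s * cK a q1) / (wK r * cK a q1)))^-1).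
Proof.
rewrite /coefL ptsL_J.
have -> : \prod_(r < a) \prod_(p < (r \in J)) Ypf q1 q2 r (wK r * cK a (q1 ^+ p.+1))
    = \prod_(r in J) Ypf q1 q2 r (wK r * cK a q1).
  rewrite [RHS]big_mkcond; apply: eq_bigr => r _.
  case: (r \in J); first by rewrite big_ord1 /= expr1.
  by rewrite big_ord0.
have -> : \prod_(r < a) \prod_(p1 < (r \in J)) \prod_(p2 < (r \in J) | (p1 < p2)%N)
      (zetaf q1 q2 q3 ((wK r * cK a (q1 ^+ p2.+1)) / (wK r * cK a (q1 ^+ p1.+1))))^-1 = 1.
  apply: big1 => r _; apply: big1 => p1 _; rewrite big_pred0 // => p2.
  have := ltn_ord p1; have := ltn_ord p2.
  case: (r \in J) p1 p2 => /= p1 p2; lia.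
rewrite mulr1; congr (_ * _).
rewrite [RHS]big_mkcond; apply: eq_bigr => r1 _.
case: (r1 \in J); last by apply: big1 => r2 _; rewrite big_ord0.
rewrite [RHS]big_mkcondl; apply: eq_bigr => r2 _.
rewrite big_ord1; case: (r2 \in J); last by rewrite big_ord0.
by rewrite big_ord1 /= !expr1.
Qed.

Lemma YsplitA a N zs q1 q2 (J : {set 'I_a}) :
  \prod_(r in J) @Yf a N zs q1 q2 r (wK r) =
  cK a (-1 / (1 - q1^-1)) ^+ #|J| * \prod_(r in J) Zf zs (wK r) *
  \prod_(r in J) \prod_(s in ~: J) ((wK r - cK a q2^-1 * wK s) / (wK r - wK s)) *
  \prod_(r in J) \prod_(s in J | r != s) ((wK r - wK s * cK a q2^-1) / (wK r - wK s)).
Proof.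
rewrite /Yf !big_split /= prodr_const -!mulrA; congr (_ * (_ * _)).
rewrite -big_split; apply: eq_bigr => r hr /=.
rewrite (bigID (fun s => s \in J)) /= mulrC; congr (_ * _).
  apply: eq_big => [s|s _]; last by rewrite (mulrC (wK s)).
  rewrite in_setC andbC; case: (boolP (s \in J)) => //= hs.
  by apply/eqP => e; move: hs; rewrite e hr.
by apply: eq_bigl => s; rewrite andbC eq_sym.
Qed.

Lemma YsplitB a q1 q2 (J : {set 'I_a}) : q1 != 0 ->
  \prod_(r in J) @Ypf a q1 q2 r (wK r * cK a q1) =
  cK a (1 / (1 - q1)) ^+ #|J| *
  \prod_(r in J) \prod_(s in ~: J) ((wK r - cK a q2 * wK s) / (wK r - wK s)) *
  \prod_(r in J) \prod_(s in J | r != s) ((wK r - wK s * cK a q2) / (wK r - wK s)).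
Proof.
move=> q10.
have c0 : cK a q1 != 0 by rewrite cK_eq0.
rewrite /Ypf !big_split /= prodr_const -!mulrA; congr (_ * _).
rewrite -big_split; apply: eq_bigr => r hr /=.
rewrite cKV mulfK //.
rewrite (bigID (fun s => s \in J)) /= mulrC; congr (_ * _).
  apply: eq_big => [s|s _]; last by rewrite (mulrC (wK s)).
  rewrite in_setC andbC; case: (boolP (s \in J)) => //= hs.
  by apply/eqP => e; move: hs; rewrite e hr.
by apply: eq_bigl => s; rewrite andbC eq_sym.
Qed.


Lemma lin1 a (r s : 'I_a) (c : CC) : r != s -> c != 0 -> cK a c * wK r * cK a c - wK s != 0.
Proof.
move=> rs c0.
have := @wK_lin_neq0 a r s (c * c) 1 rs (mulf_neq0 c0 c0).
by rewrite cKM cK1 mul1r mulrAC.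
Qed.

Lemma lin0 a (r s : 'I_a) : r != s -> wK r - wK s != 0 :> Kf a.
Proof.
move=> rs; have := @wK_lin_neq0 a r s 1 1 rs (oner_neq0 _).
by rewrite cK1 !mul1r.
Qed.

Lemma partA_J a N zs q1 q2 q3 sq1 sq2 k P n (J : {set 'I_a}) (r0 : 'I_a) :
  q1 != 0 -> q2 != 0 -> q1 != 1 -> q1 * q2 * q3 = 1 -> sq1 ^+ 2 = q1 -> sq2 ^+ 2 = q2 ->
  #|J| = k ->
  @coefG a N zs q1 q2 q3 sq1 sq2 k (@Etil a q1 q3 k P n) (fun r => nat_of_bool (r \in J)) =
  (\prod_(r in J) \prod_(s in ~: J) ((wK r - cK a q2^-1 * wK s) / (wK r - wK s))) *
  (\prod_(r in J) Zf zs (wK r)) *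
  gval P n (fun i => nth 0 [seq wK r | r <- enum J] i).
Proof.
move=> q10 q20 q11 h123 hq1 hq2 hJ.
have s10 : sq1 != 0 by apply: contraNneq q10 => e; rewrite -hq1 e expr0n.
have s20 : sq2 != 0 by apply: contraNneq q20 => e; rewrite -hq2 e expr0n.
rewrite coefG_J (@Etil_J a q1 q3 k P n J r0 (fun r => wK r) hJ) YsplitA.
apply: (@combineA _ _ _ _ _ _ _ _ _ _ (((cK a sq1 * cK a sq2)^-1 ^+ (#|J|).-1) ^+ #|J|)).
- transitivity (\prod_(r in J) \prod_(s in J | r != s)
     ((wK r - wK s * cK a q2^-1) / (wK r - wK s) * (wK r - cK a q1^-1 * wK s) *
      (wK r - wK s)^-1 * (phif sq1 sq2 (wK r / wK s))^-1)).
    under [RHS]eq_bigr => r _ do (do 3!rewrite big_split /=; rewrite prodfV).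
    by do 3!rewrite big_split /=; rewrite prodfV.
  rewrite -prod_card; apply: eq_bigr => r hr; apply: eq_bigr => s /andP [hs hrs].
  rewrite /phif -hq1 -hq2 !cKV !cKX.
  apply: pairA.
  + by rewrite cK_eq0.
  + by rewrite cK_eq0.
  + exact: wK_neq0.
  + exact: lin0.
  + exact: lin1.
  + exact: lin1.
- set cc := -1 / (1 - q1^-1).
  set C0 := (q3 ^+ 'C(k, 2))^-1 * (q1^-1 - 1) ^+ k.
  have h4 : 1 - q1^-1 != 0 by rewrite subr_eq0 eq_sym invr_eq1.
  have := @constA _ q1 q2 q3 sq1 sq2 k hq1 hq2 h123 h4.
  rewrite -/cc -/C0 => /(congr1 (cK a)).
  by rewrite cK1 !(cKM, cKX, cKV) hJ.
Qed.

Lemma partB_J a q1 q2 q3 sq1 sq2 k P n (J : {set 'I_a}) (r0 : 'I_a) :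
  q1 != 0 -> q2 != 0 -> q1 != 1 -> sq1 ^+ 2 = q1 -> sq2 ^+ 2 = q2 ->
  #|J| = k ->
  @coefL a q1 q2 q3 sq1 sq2 k (@Ftil a q1 q2 k P n) (fun r => nat_of_bool (r \in J)) =
  (\prod_(r in J) \prod_(s in ~: J) ((wK r - cK a q2 * wK s) / (wK r - wK s))) *
  gval P n (fun i => nth 0 [seq cK a q1 * wK r | r <- enum J] i).
Proof.
move=> q10 q20 q11 hq1 hq2 hJ.
have s10 : sq1 != 0 by apply: contraNneq q10 => e; rewrite -hq1 e expr0n.
have s20 : sq2 != 0 by apply: contraNneq q20 => e; rewrite -hq2 e expr0n.
rewrite coefL_J (@Ftil_J a q1 q2 k P n J r0 (fun r => cK a q1 * wK r) hJ) YsplitB //.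
apply: (@combineB _ _ _ _ _ _ _ _ _ (((cK a q2 * (cK a sq1 * cK a sq2)^-1) ^+ (#|J|).-1) ^+ #|J|)).
- rewrite (@pair_swap a J (fun r s => cK a q1 * wK r - cK a q1^-1 * (cK a q1 * wK s))).
  rewrite (@pair_swap a J (fun r s => cK a q1 * wK r - cK a q1 * wK s)).
  transitivity (\prod_(r in J) \prod_(s in J | r != s)
     ((wK r - wK s * cK a q2) / (wK r - wK s) *
      (cK a q1 * wK s - cK a q1^-1 * (cK a q1 * wK r)) *
      (cK a q1 * wK s - cK a q1 * wK r)^-1 *
      (phif sq1 sq2 ((wK s * cK a q1) / (wK r * cK a q1)))^-1)).
    under [RHS]eq_bigr => r _ do (do 3!rewrite big_split /=; rewrite prodfV).
    by do 3!rewrite big_split /=; rewrite prodfV.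
  rewrite -prod_card; apply: eq_bigr => r hr; apply: eq_bigr => s /andP [hs hrs].
  rewrite /phif -hq1 -hq2 !cKV !cKX.
  apply: pairB.
  + by rewrite cK_eq0.
  + by rewrite cK_eq0.
  + exact: wK_neq0.
  + exact: wK_neq0.
  + exact: lin0.
  + exact: lin1.
  + exact: lin1.
  + by apply: lin1; rewrite // eq_sym.
  + by apply: lin1; rewrite // eq_sym.
- set cc := 1 / (1 - q1).
  set C0 := ((q2 / q1) ^+ 'C(k, 2))^-1 * (1 - q1) ^+ k.
  have h4 : 1 - q1 != 0 by rewrite subr_eq0 eq_sym.
  have := @constB _ q1 q2 sq1 sq2 k hq1 hq2 q10 q20 h4.
  rewrite -/cc -/C0 => /(congr1 (cK a)).
  by rewrite cK1 !(cKM, cKX, cKV) hJ.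
Qed.


Definition hJ a k (J : {set 'I_a}) : {ffun 'I_a -> 'I_k.+1} := [ffun r => inord (r \in J)].
Arguments hJ {a} k J.

Lemma hJval a k (J : {set 'I_a}) r : (0 < k)%N -> (hJ k J r : nat) = (r \in J).
Proof. by move=> hk; rewrite /hJ ffunE inordK //; case: (r \in J). Qed.

Lemma reindexJ a k (T : {ffun 'I_a -> 'I_k.+1} -> Kf a) : (0 < k)%N ->
  (forall (m : {ffun 'I_a -> 'I_k.+1}) r, (\sum_(r < a) (m r : nat))%N = k -> (1 < m r)%N -> T m = 0) ->
  \sum_(m : {ffun 'I_a -> 'I_k.+1} | (\sum_(r < a) (m r : nat) == k)%N) T m =
  \sum_(J : {set 'I_a} | #|J| == k) T (hJ k J).
Proof.
move=> hk hT.
rewrite (bigID (fun m : {ffun 'I_a -> 'I_k.+1} => [forall r, (m r <= 1)%N])) /=.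
rewrite [X in _ + X]big1 ?addr0; last first.
  move=> m /andP [/eqP hs]; rewrite negb_forall => /existsP [r hr].
  by apply: (hT m r hs); rewrite ltnNge.
rewrite (reindex_onto (hJ k) (fun m : {ffun 'I_a -> 'I_k.+1} => [set r | (m r : nat) != 0%N])); last first.
  move=> m /andP [_ /forallP hm]; apply/ffunP => r; apply: val_inj.
  rewrite /= (hJval _ _ _ _ hk) inE; move: (hm r); case: (m r) => [[|[|x]] hx] //=.
apply: eq_bigl => J.
have hs : (\sum_(r < a) (hJ k J r : nat))%N = #|J|.
  rewrite -sum1_card [RHS]big_mkcond; apply: eq_bigr => r _; rewrite (hJval _ _ _ _ hk).
  by case: (r \in J).
rewrite hs.
have -> : [forall r, (hJ k J r <= 1)%N] by apply/forallP => r; rewrite (hJval _ _ _ _ hk); case: (r \in J).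
have -> : [set r | (hJ k J r : nat) != 0%N] == J.
  by apply/eqP/setP => r; rewrite inE (hJval _ _ _ _ hk); case: (r \in J).
by rewrite !andbT.
Qed.

Theorem lemma3p7 (a N : nat) (zs : 'I_N -> CC) (q1 q2 q3 sq1 sq2 : CC)
    (k : nat) (P : {mpoly CC[k]}) (n : nat) :
  (1 <= a)%N -> (1 <= k)%N ->
  (forall j, zs j != 0) ->
  q1 != 0 -> q2 != 0 -> q3 != 0 ->
  not_root_of_unity q1 -> not_root_of_unity q2 -> not_root_of_unity q3 ->
  q1 * q2 * q3 = 1 -> sq1 ^+ 2 = q1 -> sq2 ^+ 2 = q2 ->
  P \is symmetric ->
  @Phi_gt a N zs q1 q2 q3 sq1 sq2 k (@Etil a q1 q3 k P n)
    = @RHSa a N zs q2 k P n /\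
  @Phi_lt a q1 q2 q3 sq1 sq2 k (@Ftil a q1 q2 k P n)
    = @RHSb a q1 q2 k P n.
Proof.
move=> ha hk hz q10 q20 q30 hr1 hr2 hr3 h123 hq1 hq2 hsym.
pose r0 : 'I_a := Ordinal ha.
have q11 : q1 != 1 by have := hr1 1%N isT; rewrite expr1.
have hfun : forall J : {set 'I_a}, (fun r => (hJ k J r : nat)) = (fun r => nat_of_bool (r \in J)).
  by move=> J; apply: functional_extensionality => r; rewrite (hJval _ _ _ _ hk).
split.
- apply: functional_extensionality => e.
  rewrite /Phi_gt /RHSa (@reindexJ a k _ hk); last first.
    move=> m r hs hr; rewrite (@coefG_vanish _ _ _ _ _ _ _ _ _ _ _ _ _ hs hr).
    by case: ifP.
  apply: eq_bigr => J /eqP hJk.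
  rewrite hfun (@partA_J _ _ _ _ _ _ _ _ _ _ _ _ r0 q10 q20 q11 h123 hq1 hq2 hJk).
  have -> : [ffun r => - ((hJ k J r : nat)%:Z)] = [ffun r => - (((r \in J) : nat)%:Z)].
    by apply/ffunP => r; have := hJval _ k J r hk; rewrite !ffunE => ->.
  by [].
- apply: functional_extensionality => e.
  rewrite /Phi_lt /RHSb (@reindexJ a k _ hk); last first.
    move=> m r hs hr; rewrite (@coefL_vanish _ _ _ _ _ _ _ _ _ _ _ q10 hs hr).
    by case: ifP.
  apply: eq_bigr => J /eqP hJk.
  rewrite hfun (@partB_J _ _ _ _ _ _ _ _ _ _ r0 q10 q20 q11 hq1 hq2 hJk).
  have -> : [ffun r => (hJ k J r : nat)%:Z] = [ffun r => (((r \in J) : nat)%:Z)].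
    by apply/ffunP => r; have := hJval _ k J r hk; rewrite !ffunE => ->.
  by [].
Qed.
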